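(* $z_2(4,3)=8$.
   Context: Double Zarankiewicz number: consider configurations $G=([m],[n],E_1\cup E_2)$ where $[m]=\{1,\dots,m\}$, $E_1\subseteq[m]\times[n]$ is a set of 1-edges (cells) and $E_2$ is a set of 2-edges $(i,j;k,l)$ with $i,k\in[m]$, $j,l\in[n]$, $i\ne k$, $j\ne l$; the cells $(i,j)$ and $(k,l)$ are the two halves of this 2-edge. Simplicity condition: the halves of all 2-edges are pairwise distinct cells and none of them belongs to $E_1$. A cell is occupied if it lies in $E_1$ or is a half of some 2-edge. $G$ contains a generalized $C_4$-cycle if (1) there are four 1-edges $(i,j),(i,l),(k,j),(k,l)\in E_1$ with $i\ne k$, $j\ne l$; or (2) there is a 2-edge $(i,j;k,l)\in E_2$ whose two opposite cells $(i,l)$ and $(k,j)$ are both occupied; or (3) there are a 2-edge $(i,j;p,q)\in E_2$ and a cell $(k,l)$ such that the five cells $(k,l),(k,j),(k,q),(i,l),(p,l)$ are pairwise distinct and all occupied. $z_2(m,n)$ is the maximum of $|E_1|+|E_2|$ over all such $G$ satisfying the simplicity condition and containing no generalized $C_4$-cycle. *)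

(* Defs.v *)
From mathcomp Require Import all_boot.
Set Implicit Arguments. Unset Strict Implicit. Unset Printing Implicit Defensive.

(* Cells of [m] x [n], with [m] encoded as 'I_m (row i+1 <-> ordinal i). *)
Definition cell (m n : nat) : finType := ('I_m * 'I_n)%type.

(* A 2-edge (i,j;k,l) is encoded as the ordered pair of its halves
   ((i,j),(k,l)).  A configuration is a pair (E1, E2). *)
Definition config (m n : nat) : finType :=
  ({set cell m n} * {set (cell m n * cell m n)})%type.

Section Defs.
Variables m n : nat.
Implicit Types (G : config m n) (c : cell m n) (e : cell m n * cell m n).

Definition two_edge_ok e := (e.1.1 != e.2.1) && (e.1.2 != e.2.2).

Definition is_half c e := (c == e.1) || (c == e.2).

(* Simplicity: the halves of all 2-edges are pairwise distinct cells
   (distinct 2-edges share no half; the two halves of a 2-edge differ,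
   which is automatic from two_edge_ok), and no half lies in E1. *)
Definition simple_config G :=
  [&& [forall e in G.2, two_edge_ok e],
      [forall e in G.2, forall e' in G.2,
         (e != e') ==> [forall c, ~~ (is_half c e && is_half c e')]] &
      [forall e in G.2, (e.1 \notin G.1) && (e.2 \notin G.1)]].

Definition occupied G c := (c \in G.1) || [exists e in G.2, is_half c e].

Definition cyc1 G :=
  [exists i : 'I_m, exists k : 'I_m, exists j : 'I_n, exists l : 'I_n,
     [&& i != k, j != l, (i, j) \in G.1, (i, l) \in G.1,
         (k, j) \in G.1 & (k, l) \in G.1]].

Definition cyc2 G :=
  [exists e in G.2,
     occupied G (e.1.1, e.2.2) && occupied G (e.2.1, e.1.2)].

Definition cyc3 G :=
  [exists e in G.2, exists k : 'I_m, exists l : 'I_n,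
     let i := e.1.1 in let j := e.1.2 in let p := e.2.1 in let q := e.2.2 in
     let s := [:: (k, l); (k, j); (k, q); (i, l); (p, l)] in
     uniq s && all (occupied G) s].

Definition C4_free G := ~~ [|| cyc1 G, cyc2 G | cyc3 G].

Definition admissible G := simple_config G && C4_free G.

Definition weight G := #|G.1| + #|G.2|.

End Defs.

Definition z2 (m n : nat) : nat :=
  \max_(G : config m n | admissible G) weight G.

(* Main.v *)
Require Import Defs.
From mathcomp Require Import all_boot zify.
Set Implicit Arguments. Unset Strict Implicit. Unset Printing Implicit Defensive.

Notation O4 k := (@Ordinal 4 k isT).
Notation O3 k := (@Ordinal 3 k isT).
Definition cl : seq (cell 4 3) :=
  [:: (O4 0, O3 0); (O4 0, O3 1); (O4 0, O3 2);
      (O4 1, O3 0); (O4 1, O3 1); (O4 1, O3 2);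
      (O4 2, O3 0); (O4 2, O3 1); (O4 2, O3 2);
      (O4 3, O3 0); (O4 3, O3 1); (O4 3, O3 2)].
Definition d0 : cell 4 3 := (O4 0, O3 0).

Lemma cl_nth (i : 'I_4) (j : 'I_3) : nth d0 cl (3 * i + j) = (i, j).
Proof.
case: i => [[|[|[|[|i]]]] Hi] //; case: j => [[|[|[|j]]] Hj] //; apply/eqP; by [].
Qed.

Lemma cl_uniq : uniq cl. Proof. by []. Qed.
Lemma cl_all c : c \in cl.
Proof. case: c => [[[|[|[|[|i]]]] Hi] [[|[|[|j]]] Hj]] //. Qed.
Lemma size_cl : size cl = 12. Proof. by []. Qed.

Lemma card_cl (A : {pred cell 4 3}) : #|A| = count A cl.
Proof.
rewrite cardE -size_filter; apply: perm_size; apply: uniq_perm.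
- exact: enum_uniq.
- exact: filter_uniq cl_uniq.
- by move=> x; rewrite mem_enum mem_filter cl_all andbT.
Qed.
Definition c4b (s : seq bool) :=
  has (fun i => has (fun k => has (fun j => has (fun l =>
    [&& i != k, j != l, nth false s (3*i+j), nth false s (3*i+l),
        nth false s (3*k+j) & nth false s (3*k+l)]) (iota 0 3)) (iota 0 3)) (iota 0 4)) (iota 0 4).
Definition test7 s := (count id s <= 7) || c4b s.
Fixpoint bchk n acc := if n is n'.+1 then bchk n' (false :: acc) && bchk n' (true :: acc)
  else test7 acc.
Lemma bchk12 : bchk 12 [::]. Proof. vm_compute. reflexivity. Qed.

Lemma bchk_ok n acc : bchk n acc -> forall s, size s = n -> test7 (rev s ++ acc).
Proof.
elim: n acc => [|n IH] acc /=.
  by move=> H [|//] _.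
case/andP=> H0 H1 [//|x s] /= [Hs].
rewrite rev_cons cat_rcons.
case: x; [exact: (IH _ H1) | exact: (IH _ H0)].
Qed.

Lemma L7 (G : config 4 3) : ~~ cyc1 G -> #|G.1| <= 7.
Proof.
move=> nc.
set s := map (fun c => c \in G.1) cl.
have := bchk_ok bchk12 (s := rev s); rewrite size_rev size_map size_cl revK cats0 => /(_ erefl); rewrite /test7.
have -> : count id s = #|G.1| by rewrite count_map card_cl.
case/orP => // Hc; case/negP: nc.
case/hasP: Hc => i; rewrite mem_iota => /andP[_ Hi].
case/hasP => k; rewrite mem_iota => /andP[_ Hk].
case/hasP => j; rewrite mem_iota => /andP[_ Hj].
case/hasP => l; rewrite mem_iota => /andP[_ Hl].
have Hn : forall (a : 'I_4) (b : 'I_3), nth false s (3 * a + b) = ((a, b) \in G.1).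
  move=> a b; rewrite (nth_map d0); first by rewrite cl_nth.
  by rewrite size_cl; case: a b => a Ha [b Hb] /=; lia.
move: (Hn (Ordinal Hi) (Ordinal Hj)) (Hn (Ordinal Hi) (Ordinal Hl))
      (Hn (Ordinal Hk) (Ordinal Hj)) (Hn (Ordinal Hk) (Ordinal Hl)) => /= -> -> -> -> H.
apply/existsP; exists (Ordinal Hi); apply/existsP; exists (Ordinal Hk).
apply/existsP; exists (Ordinal Hj); apply/existsP; exists (Ordinal Hl).
exact: H.
Qed.

Lemma cardsU_disj (T : finType) (A B : {set T}) : A :&: B = set0 -> #|A :|: B| = #|A| + #|B|.
Proof. by move=> H; rewrite -cardsUI H cards0 addn0. Qed.

Lemma upper (G : config 4 3) : admissible G -> weight G <= 8.
Proof.
case/andP=> /and3P[/forall_inP Hok /forall_inP Hdis /forall_inP Hne] Hfree.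
move: Hfree; rewrite /C4_free !negb_or => /and3P[nc1 nc2 _].
have H7 := L7 nc1.
have Hdis' : forall e e' c, e \in G.2 -> e' \in G.2 -> is_half c e -> is_half c e' -> e = e'.
  move=> e e' c He He' h1 h2; case: (eqVneq e e') => // Hn.
  by move: (Hdis e He) => /forall_inP /(_ e' He') /implyP /(_ Hn) /forallP /(_ c); rewrite h1 h2.
have Hok12 : forall e, e \in G.2 -> e.1 != e.2.
  move=> e /Hok /andP[H _]; apply: contra H => /eqP ->; by [].
set O := [set c | occupied G c].
set F := [set e.1 | e in G.2]; set S := [set e.2 | e in G.2].
have cF : #|F| = #|G.2|.
  apply: card_in_imset => e e' He He' E; apply: (Hdis' e e' e.1) => //; rewrite /is_half ?E eqxx //.
have cS : #|S| = #|G.2|.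
  apply: card_in_imset => e e' He He' E; apply: (Hdis' e e' e.2) => //; rewrite /is_half ?E eqxx ?orbT //.
have dFS : F :&: S = set0.
  apply/setP => c; rewrite !inE; apply/negbTE/negP => /andP[/imsetP[e He ->] /imsetP[e' He' E]].
  have ee : e = e' by apply: (Hdis' e e' e.1) => //; rewrite /is_half ?E eqxx ?orbT.
  by move: (Hok12 e He); rewrite E ee eqxx.
have d1FS : G.1 :&: (F :|: S) = set0.
  apply/setP => c; rewrite !inE; apply/negbTE/negP => /andP[Hc] /orP[] /imsetP[e He E];
  by case/andP: (Hne e He); rewrite -E Hc.
have Hsub : G.1 :|: (F :|: S) \subset O.
  apply/subsetP => c; rewrite !inE /occupied => /orP[->//|/orP[/imsetP[e He ->]|/imsetP[e He ->]]].
  1,2: by apply/orP; right; apply/existsP; exists e; rewrite He /is_half eqxx ?orbT.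
have cO : #|G.1| + 2 * #|G.2| <= #|O|.
  move: (subset_leq_card Hsub); rewrite (cardsU_disj d1FS) (cardsU_disj dFS) cF cS; lia.
have cT : #|O| + #|~: O| = 12 by rewrite cardsC card_prod !card_ord.
rewrite /weight; case: (leqP #|G.2| 0) => [|Hpos].
  by rewrite leqn0 => /eqP ->; rewrite addn0 (leq_trans H7).
case: (leqP (#|G.1| + #|G.2|) 8) => // Hbig; exfalso.
case/card_gt0P: Hpos => e0 He0.
have nc2e : forall e, e \in G.2 -> ~~ (occupied G (e.1.1, e.2.2) && occupied G (e.2.1, e.1.2)).
  by move=> e He; apply: contra nc2 => H; apply/existsP; exists e; rewrite He.
have : 0 < #|~: O|.
  apply/card_gt0P; move: (nc2e e0 He0); rewrite negb_and => /orP[H|H];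
  [exists (e0.1.1, e0.2.2) | exists (e0.2.1, e0.1.2)]; by rewrite !inE.
move=> Hc.
have : #|~: O| = 1 by lia.
move=> /eqP/cards1P [x Hx].
have Hunocc : forall c, ~~ occupied G c -> c = x.
  by move=> c Hc'; apply/set1P; rewrite -Hx !inE.
have Hin : forall (k : 'I_4) (l : 'I_3), k != x.1 -> l != x.2 -> (k, l) \in G.1.
  move=> k l Hk Hl.
  have Ho : occupied G (k, l).
    apply/negPn/negP => /Hunocc E; by move: Hk; rewrite -E eqxx.
  move: Ho; rewrite /occupied => /orP[//|/existsP[e /andP[He Hh]]].
  exfalso; move: (nc2e e He) Hh; case: e He => [[i j] [p q]] /= He.
  rewrite negb_and /is_half /= => /orP[] /Hunocc E; subst x; move: Hk Hl => /= Hk Hl;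
  by case/orP => /eqP [E1 E2]; move: Hk Hl; rewrite ?E1 ?E2 eqxx ?andbF.
have [k1 [k2 /and3P[K12 K1 K2]]] : exists k1 k2 : 'I_4, [&& k1 != k2, k1 != x.1 & k2 != x.1].
  case: x.1 => [[|[|[|[|r]]]] Hr4] //;
  [exists (O4 1), (O4 2) | exists (O4 0), (O4 2) | exists (O4 0), (O4 1) | exists (O4 0), (O4 1)]; done.
have [l1 [l2 /and3P[L12 L1 L2]]] : exists l1 l2 : 'I_3, [&& l1 != l2, l1 != x.2 & l2 != x.2].
  case: x.2 => [[|[|[|r]]] Hr3] //;
  [exists (O3 1), (O3 2) | exists (O3 0), (O3 2) | exists (O3 0), (O3 1)]; done.
case/negP: nc1; apply/existsP; exists k1; apply/existsP; exists k2;
apply/existsP; exists l1; apply/existsP; exists l2.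
by rewrite K12 L12 !Hin.
Qed.

Definition cl7 : seq (cell 4 3) := [:: (O4 1,O3 2); (O4 3,O3 1); (O4 1,O3 1); (O4 2,O3 0); (O4 3,O3 0); (O4 0,O3 2); (O4 2,O3 2)].
Definition ea : cell 4 3 := (O4 0, O3 1).
Definition eb : cell 4 3 := (O4 1, O3 0).
Definition G0 : config 4 3 := ([set c in cl7], [set (ea, eb)]).

Lemma occ0 c : occupied G0 c = [|| c \in cl7, c == ea | c == eb].
Proof.
rewrite /occupied /= inE; congr orb; apply/existsP/idP.
  by case=> e /andP[/set1P -> ].
by move=> H; exists (ea, eb); rewrite inE eqxx.
Qed.

Lemma weight0 : weight G0 = 8.
Proof. by rewrite /weight /= cards1 cardsE (card_uniqP (isT : uniq cl7)). Qed.

Lemma adm0 : admissible G0.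
Proof.
apply/andP; split.
  apply/and3P; split.
  - by apply/forall_inP => e /set1P ->.
  - apply/forall_inP => e /set1P ->; apply/forall_inP => e' /set1P ->; by rewrite eqxx.
  - by apply/forall_inP => e /set1P ->; rewrite !inE.
rewrite /C4_free !negb_or; apply/and3P; split.
- apply/negP; case/existsP => i /existsP[k /existsP[j /existsP[l]]]; rewrite /= !inE.
  case: i => [[|[|[|[|i]]]] Hi] //; case: k => [[|[|[|[|k]]]] Hk] //;
  case: j => [[|[|[|j]]] Hj] //; case: l => [[|[|[|l]]] Hl] //.
- apply/negP; case/existsP => e /andP[/set1P -> ]; by rewrite !occ0.
- apply/negP; case/existsP => e /andP[/set1P -> ] /existsP[k /existsP[l]] /=.
  rewrite !occ0.
  case: k => [[|[|[|[|k]]]] Hk] //; case: l => [[|[|[|l]]] Hl] //.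
Qed.

Theorem theorem2p4 : z2 4 3 = 8.
Proof.
apply/eqP; rewrite eqn_leq; apply/andP; split.
  by apply/bigmax_leqP => G HG; exact: upper.
by rewrite -{1}weight0; apply: leq_bigmax_cond adm0.
Qed.
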